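(* The detour sequence of every path-unicyclic graph is full.
   Context: All graphs are finite and simple. A path-unicyclic graph is a graph obtained from a cycle $C$ by attaching pairwise vertex-disjoint paths to some (at least one, possibly all) of the vertices of $C$, at most one path per vertex of $C$, where each attached path meets $C$ only in one of its endvertices (the attached path being joined to $C$ at that vertex). The order of a path is its number of vertices. For a vertex $v$, $\tau(v)$ is the order of a longest path in the graph having $v$ as an endvertex. The detour sequence is the nondecreasing sequence $d_1\le\cdots\le d_n$ of the values $\tau(v)$ over all vertices. It is full if every integer $k$ with $d_1\le k\le d_n$ occurs in it, equivalently $d_i-d_{i-1}\le 1$ for all $2\le i\le n$. *)

(* Defs.v *)
From mathcomp Require Import all_boot.
Set Implicit Arguments. Unset Strict Implicit. Unset Printing Implicit Defensive.

Definition has_path_from (T : finType) (e : rel T) (v : T) (n : nat) : bool :=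
  [exists t : n.-tuple T, path e v t && uniq (v :: t)].

(* tau e v: the order (number of vertices) of a longest path having v as
   an endvertex.  Such a path has at most #|T| vertices, so its number of
   edges n is < #|T|. *)
Definition tau (T : finType) (e : rel T) (v : T) : nat :=
  (\max_(n < #|T| | has_path_from e v n) (n : nat)).+1.

Definition detour_full (T : finType) (e : rel T) : Prop :=
  forall (u w : T) (k : nat), tau e u <= k <= tau e w -> exists v : T, tau e v = k.

(* Concrete path-unicyclic graph: cycle on 'I_m (m >= 3); at cycle vertex i
   a path with len i further vertices is attached.  Vertex (i, 0) is the
   cycle vertex i, vertex (i, j), 1 <= j <= len i, is the j-th vertex of the
   path attached at i (so (i,0),(i,1),...,(i,len i) is a path). *)
Definition pu_vertex (m : nat) (len : 'I_m -> nat) : finType :=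
  {i : 'I_m & 'I_(len i).+1}.

Definition cyc_adj (m : nat) (i j : 'I_m) : bool :=
  ((j : nat) == i.+1 %% m) || ((i : nat) == j.+1 %% m).

Definition pu_adj (m : nat) (len : 'I_m -> nat) : rel (pu_vertex len) :=
  fun x y =>
    if tag x == tag y then
      ((tagged x : nat).+1 == tagged y) || ((tagged y : nat).+1 == tagged x)
    else
      [&& (tagged x : nat) == 0, (tagged y : nat) == 0 & cyc_adj (tag x) (tag y)].

Definition path_unicyclic (T : finType) (e : rel T) : Prop :=
  exists (m : nat) (len : 'I_m -> nat) (f : T -> pu_vertex len),
    [/\ 3 <= m, (exists i : 'I_m, 0 < len i), bijective f &
        forall x y : T, e x y = pu_adj (f x) (f y)].

(* Main.v *)
Require Import Defs.
From mathcomp Require Import all_boot zify.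
Set Implicit Arguments. Unset Strict Implicit. Unset Printing Implicit Defensive.

Lemma tau_ub (T : finType) (e : rel T) (v : T) (s : seq T) :
  path e v s -> uniq (v :: s) -> size s < tau e v.
Proof.
move=> Hp Hu.
have Hs : size s < #|T|.
  have := max_card (mem (v :: s)); rewrite (card_uniqP Hu) /=; by [].
rewrite /tau ltnS.
have Hh : has_path_from e v (Ordinal Hs).
  by apply/existsP; exists (in_tuple s); apply/andP.
have := @leq_bigmax_cond _ (fun n : 'I_#|T| => has_path_from e v n) (fun n : 'I_#|T| => nat_of_ord n) _ Hh; exact.
Qed.

Lemma tau_wit (T : finType) (e : rel T) (v : T) :
  exists s : seq T, [/\ path e v s, uniq (v :: s) & (size s).+1 = tau e v].
Proof.
have Hc : 0 < #|T| by apply/card_gt0P; exists v.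
have H0 : has_path_from e v (Ordinal Hc).
  apply/existsP; exists [tuple]; by [].
case: (@arg_maxnP _ _ (fun n : 'I_#|T| => has_path_from e v n) (fun n : 'I_#|T| => (n : nat)) H0) => i Pi Hmax.
case/existsP: (Pi) => t /andP [Hp Hu].
exists t; split => //.
rewrite /tau size_tuple; congr S; apply/eqP; rewrite eqn_leq; apply/andP; split.
  exact: (@leq_bigmax_cond _ (fun n : 'I_#|T| => has_path_from e v n) (fun n : 'I_#|T| => nat_of_ord n) _ Pi).
by apply/bigmax_leqP => j Pj; apply: Hmax.
Qed.

Lemma region_path (T : eqType) (e : rel T) (B : pred T) (c : T) :
  (forall x y, e x y -> e y x) ->
  (forall z y, B z -> e z y -> B y \/ y = c) ->
  forall a s, path e a s -> c \notin a :: s -> forall z, z \in s -> B z = B a.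
Proof.
move=> Hsym Hcl a s; elim: s a => [|b s IH] a //= /andP [Hab Hp].
rewrite !inE negb_or => /andP [Hca /norP [Hcb Hcs]] z.
have Hba : B b = B a.
  apply/idP/idP => HB.
  - case: (Hcl b a HB (Hsym _ _ Hab)) => // Ha; by rewrite Ha eqxx in Hca.
  - case: (Hcl a b HB Hab) => // Hb; by rewrite Hb eqxx in Hcb.
rewrite inE => /orP [/eqP -> //| Hz].
rewrite -Hba; apply: (IH b Hp) => //; by rewrite inE negb_or Hcb.
Qed.

Lemma tau_iso (T T' : finType) (e : rel T) (e' : rel T') (f : T -> T') :
  bijective f -> (forall x y, e x y = e' (f x) (f y)) ->
  forall v, tau e v = tau e' (f v).
Proof.
move=> [g fg gf] He v.
have fi : injective f := can_inj fg.
have gi : injective g := can_inj gf.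
apply/eqP; rewrite eqn_leq; apply/andP; split.
- case: (tau_wit e v) => s [Hp Hu <-].
  rewrite -(size_map f); apply: (tau_ub (s := map f s)).
  + rewrite path_map; apply: sub_path Hp => x y /=; by rewrite He.
  + by rewrite -map_cons (map_inj_uniq fi).
- case: (tau_wit e' (f v)) => s [Hp Hu <-].
  rewrite -(size_map g); apply: (tau_ub (s := map g s)).
  + rewrite -{1}(fg v) path_map; apply: sub_path Hp => x y /=; by rewrite He !gf.
  + by rewrite -{1}(fg v) -map_cons (map_inj_uniq gi).
Qed.


Definition mkv (m : nat) (len : 'I_m -> nat) (i : 'I_m) (j : nat) : pu_vertex len :=
  @Tagged 'I_m i (fun i => 'I_(len i).+1) (inord j).

Lemma tag_mkv m (len : 'I_m -> nat) i j : tag (mkv len i j) = i.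
Proof. by []. Qed.

Lemma tagged_mkv m (len : 'I_m -> nat) i j : j <= len i -> (tagged (mkv len i j) : nat) = j.
Proof. by move=> H; rewrite /= inordK. Qed.

Lemma vert_eq m (len : 'I_m -> nat) (u v : pu_vertex len) :
  tag u = tag v -> (tagged u : nat) = tagged v -> u = v.
Proof.
case: u => iu ju; case: v => iv jv /= Heq; subst iv => H.
by congr Tagged; apply: val_inj.
Qed.

Lemma cyc_sym m (i j : 'I_m) : cyc_adj i j = cyc_adj j i.
Proof. by rewrite /cyc_adj orbC. Qed.

Lemma pu_sym m (len : 'I_m -> nat) (x y : pu_vertex len) : pu_adj x y = pu_adj y x.
Proof. by rewrite /pu_adj eq_sym orbC cyc_sym (andbCA (_ == 0)). Qed.

Lemma pu_irr m (len : 'I_m -> nat) (x : pu_vertex len) : pu_adj x x = false.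
Proof. by rewrite /pu_adj eqxx /= orbb; apply/negbTE; rewrite neq_ltn ltnSn orbT. Qed.

Lemma nbr_inner m (len : 'I_m -> nat) (x y : pu_vertex len) :
  (tagged x : nat) != 0 -> pu_adj x y ->
  tag y = tag x /\ ((tagged x : nat).+1 = tagged y \/ (tagged y : nat).+1 = tagged x).
Proof.
move=> Hx; rewrite /pu_adj; case: eqP => [Ht|Ht].
  by case/orP => /eqP H; split => //; [left|right].
by rewrite (negbTE Hx).
Qed.

Definition below m (len : 'I_m -> nat) (c : pu_vertex len) : pred (pu_vertex len) :=
  fun z => (tag z == tag c) && ((tagged c : nat) < tagged z).

Lemma below_closed m (len : 'I_m -> nat) (c z y : pu_vertex len) :
  below c z -> pu_adj z y -> below c y \/ y = c.
Proof.
case/andP => /eqP Hzc Hlt Hzy.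
have Hz0 : (tagged z : nat) != 0 by rewrite -lt0n (leq_ltn_trans _ Hlt).
case: (nbr_inner Hz0 Hzy) => Hyz [H|H].
  by left; apply/andP; split; [apply/eqP; rewrite Hyz | rewrite -H ltnS ltnW].
move: Hlt; rewrite -H ltnS leq_eqVlt => /orP [/eqP E|E].
  by right; apply: vert_eq; rewrite ?Hyz.
by left; apply/andP; split; [apply/eqP; rewrite Hyz |].
Qed.

Lemma nbr_zero m (len : 'I_m -> nat) (x y : pu_vertex len) :
  (tagged x : nat) = 0 -> pu_adj x y -> ~~ below x y ->
  [/\ tag y != tag x, (tagged y : nat) = 0 & cyc_adj (tag x) (tag y)].
Proof.
move=> Hx; rewrite /pu_adj; case: eqP => [Ht|Ht].
  move=> /orP [/eqP H|/eqP H] Hn; last by rewrite Hx in H.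
  exfalso; move/negP: Hn; apply; apply/andP; split; first by apply/eqP; rewrite Ht.
  by rewrite -H Hx.
move=> /and3P [_ /eqP -> H] _; split => //; by apply/eqP => E; apply: Ht.
Qed.

Lemma succ_inj m (a b : 'I_m) : a.+1 %% m = b.+1 %% m -> a = b.
Proof.
move=> H; apply: val_inj => /=.
have Ha := ltn_ord a; have Hb := ltn_ord b.
case: (ltnP a.+1 m) => Ha'; case: (ltnP b.+1 m) => Hb'.
- by move: H; rewrite !modn_small // => /succn_inj.
- have Eb : b.+1 = m by lia.
  by move: H; rewrite (modn_small Ha') Eb modnn.
- have Ea : a.+1 = m by lia.
  by move: H; rewrite (modn_small Hb') Ea modnn.
- have Ea : a.+1 = m by lia.
  have Eb : b.+1 = m by lia.
  by apply: succn_inj; rewrite Ea Eb.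
Qed.

Lemma cyc_three m (x a b c : 'I_m) :
  cyc_adj x a -> cyc_adj x b -> cyc_adj x c -> [\/ a = b, a = c | b = c].
Proof.
rewrite /cyc_adj.
have E1 (u v : 'I_m) : (u : nat) == x.+1 %% m -> (v : nat) == x.+1 %% m -> u = v.
  by move=> /eqP Hu /eqP Hv; apply: val_inj; rewrite /= Hu Hv.
have E2 (u v : 'I_m) : (x : nat) == u.+1 %% m -> (x : nat) == v.+1 %% m -> u = v.
  by move=> /eqP Hu /eqP Hv; apply: succ_inj; rewrite -Hu -Hv.
case/orP => Ha; case/orP => Hb; case/orP => Hc.
all: first [ by constructor 1; eauto | by constructor 2; eauto | by constructor 3; eauto ].
Qed.

Lemma count_below m (len : 'I_m -> nat) (c : pu_vertex len) (s : seq (pu_vertex len)) :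
  uniq s -> (forall z, z \in s -> below c z) -> size s <= len (tag c) - tagged c.
Proof.
move=> Hu Hb.
rewrite -(size_map (fun z : pu_vertex len => (tagged z : nat))) -(size_iota (tagged c).+1 (len (tag c) - tagged c)).
apply: uniq_leq_size.
  rewrite map_inj_in_uniq // => u v Hu' Hv' E.
  apply: vert_eq => //.
  case/andP: (Hb u Hu') => /eqP E1 _; case/andP: (Hb v Hv') => /eqP E2 _.
  by rewrite E1 E2.
move=> k /mapP [z Hz ->]; rewrite mem_iota.
case/andP: (Hb z Hz) => /eqP Ht Hlt; rewrite Hlt /=.
have H2 : len (tag z) = len (tag c) by rewrite Ht.
have H1 : (tagged z : nat) < (len (tag c)).+1 by rewrite -H2; exact: ltn_ord.
have := ltn_ord (tagged c).
move: Hlt H1; move: (nat_of_ord (tagged z)) => a; move: (nat_of_ord (tagged c)) => b; move: (len (tag c)) => l; lia.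
Qed.


Fixpoint down (n : nat) : seq nat := if n is n'.+1 then n' :: down n' else [::].

Lemma mem_down n k : (k \in down n) = (k < n).
Proof. elim: n => [|n IH] //=; by rewrite inE IH ltnS (leq_eqVlt k). Qed.

Lemma uniq_down n : uniq (n :: down n).
Proof.
elim: n => [|n IH] //.
rewrite [down _]/= cons_uniq inE mem_down IH andbT.
by apply/negP => /orP [/eqP H|H]; [move: (n_Sn n); rewrite H | move: (ltnW H); rewrite ltnn].
Qed.

Lemma size_down n : size (down n) = n.
Proof. by elim: n => //= n ->. Qed.

Definition armv m (len : 'I_m -> nat) i n := map (mkv len i) (down n).

Lemma arm_path m (len : 'I_m -> nat) i n : n <= len i -> path (@pu_adj m len) (mkv len i n) (armv len i n).
Proof.
elim: n => [|n IH] Hn //=.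
rewrite IH ?(ltnW Hn) // andbT /pu_adj eqxx /= !tagged_mkv ?(ltnW Hn) //.
by rewrite eqxx orbT.
Qed.

Lemma arm_last m (len : 'I_m -> nat) i n : last (mkv len i n) (armv len i n) = mkv len i 0.
Proof. by elim: n => [|n IH] //=. Qed.

Lemma arm_mem m (len : 'I_m -> nat) i n z : n <= len i ->
  z \in mkv len i n :: armv len i n -> tag z = i /\ (tagged z : nat) <= n.
Proof.
move=> Hn; rewrite -map_cons => /mapP [k Hk ->]; split => //.
have Hk' : k <= n by move: Hk; rewrite inE mem_down => /orP [/eqP ->|/ltnW].
by rewrite tagged_mkv // (leq_trans Hk').
Qed.

Lemma arm_uniq m (len : 'I_m -> nat) i n : n <= len i -> uniq (mkv len i n :: armv len i n).
Proof.
move=> Hn; rewrite -map_cons map_inj_in_uniq ?uniq_down // => a b Ha Hb E.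
have Ha' : a <= len i by move: Ha; rewrite inE mem_down => /orP [/eqP ->|/ltnW/leq_trans]; auto.
have Hb' : b <= len i by move: Hb; rewrite inE mem_down => /orP [/eqP ->|/ltnW/leq_trans]; auto.
by rewrite -(tagged_mkv Ha') -(tagged_mkv Hb') E.
Qed.

Lemma size_arm m (len : 'I_m -> nat) i n : size (armv len i n) = n.
Proof. by rewrite size_map size_down. Qed.


Lemma lip_arm m (len : 'I_m -> nat) i j : j < len i ->
  tau (@pu_adj m len) (mkv len i j.+1) <= (tau (@pu_adj m len) (mkv len i j)).+1 /\
  tau (@pu_adj m len) (mkv len i j) <= (tau (@pu_adj m len) (mkv len i j.+1)).+1.
Proof.
move=> Hj.
set E := @pu_adj m len.
set x := mkv len i j.+1; set y := mkv len i j.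
have Hsym : forall a b, E a b -> E b a by move=> a b; rewrite /E pu_sym.
have Hx : (tagged x : nat) = j.+1 by rewrite tagged_mkv.
have Hy : (tagged y : nat) = j by rewrite tagged_mkv // ltnW.
have Exy : E x y by rewrite /E /pu_adj eqxx Hx Hy eqxx orbT.
have Hxy : x != y by apply/eqP => H; move: Hx; rewrite H Hy => /n_Sn.
have NbrX : forall z, E x z -> z = y \/ below x z.
  move=> z Hz; have Hx0 : (tagged x : nat) != 0 by rewrite Hx.
  case: (nbr_inner Hx0 Hz) => Ht [H|H].
    by right; apply/andP; split; [apply/eqP; rewrite Ht | rewrite -H].
  by left; apply: vert_eq => //; apply: succn_inj; rewrite H Hx Hy.
have By : ~~ below x y by rewrite /below Hx Hy ltnNge leqnSn andbF.
have Hcl : forall z w, below x z -> E z w -> below x w \/ w = x.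
  by move=> z w; apply: below_closed.
split.
- case: (tau_wit E x) => s [Hp Hu <-].
  case: (boolP (y \in x :: s)) => Hy'.
  + case: s Hp Hu Hy' => [|z s'] /=.
      by rewrite !inE eq_sym (negbTE Hxy).
    move=> /andP [Hz Hp] Hu Hy'.
    case: (NbrX z Hz) => [Ez|Bz].
      subst z; rewrite ltnS; apply: tau_ub => //.
      by move: Hu => /andP [].
    exfalso.
    have Hc : x \notin z :: s' by move: Hu => /andP [].
    have := region_path Hsym Hcl Hp Hc.
    move: Hy'; rewrite !inE (eq_sym y x) (negbTE Hxy) /= => /orP [/eqP Eyz|Hys] Hreg.
      by move: By; rewrite Eyz Bz.
    by move: By; rewrite (Hreg y Hys) Bz.
  + have P1 : path E y (x :: s) by rewrite /= (Hsym _ _ Exy).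
    have U1 : uniq (y :: x :: s) by rewrite cons_uniq Hy' Hu.
    have := tau_ub P1 U1; rewrite /=; lia.
- case: (tau_wit E y) => s [Hp Hu <-].
  case: (boolP (x \in y :: s)) => Hx'.
  + have Hxs : x \in s by move: Hx'; rewrite inE (negbTE Hxy).
    case/splitPr: Hxs Hp Hu => s1 s2.
    case: s1 => [|a s1] /=.
      move=> /andP [_ Hp] /and3P [_ Hn Hu2]; rewrite ltnS; apply: tau_ub => //.
      by rewrite cons_uniq Hn Hu2.
    move=> /andP [Hya]; rewrite cat_path => /andP [Hp1 Hp2] /and3P [Hyn0 Han Hu1].
    have U : uniq (y :: a :: s1 ++ x :: s2) by rewrite cons_uniq Hyn0 cons_uniq Han Hu1.
    exfalso.
    have Ez : E (last a s1) x by move: Hp2 => /= /andP [].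
    have Hyn : y \notin a :: s1.
      by move: Hyn0; rewrite -cat_cons mem_cat negb_or => /andP [].
    have Hxn : x \notin y :: a :: s1.
      move: U; rewrite -cat_cons -cat_cons cat_uniq => /and3P [_ H _].
      by apply: contra H => Hin; apply/hasP; exists x => //; rewrite inE eqxx.
    have Hpa : path E y (a :: s1) by rewrite /= Hya Hp1.
    have Hreg := region_path Hsym Hcl Hpa Hxn.
    have Hl : last a s1 \in a :: s1 by apply: mem_last.
    case: (NbrX _ (Hsym _ _ Ez)) => [El|Bl].
      by move: Hyn; rewrite -El Hl.
    by move: By; rewrite -(Hreg _ Hl) Bl.
  + have P1 : path E x (y :: s) by rewrite /= Exy.
    have U1 : uniq (x :: y :: s) by rewrite cons_uniq Hx' Hu.
    have := tau_ub P1 U1; rewrite /=; lia.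
Qed.


Lemma ar1 a b : a <= (b + a).+1. Proof. lia. Qed.
Lemma ar2 a b c : c <= b -> a + c.+1 <= (b + a.+1).+1. Proof. lia. Qed.

Lemma key_adj m (len : 'I_m -> nat) (x r : 'I_m) : x != r -> cyc_adj x r ->
  tau (@pu_adj m len) (mkv len r 0) <= (tau (@pu_adj m len) (mkv len x (len x))).+1.
Proof.
move=> Hxr Hcyc.
set E := @pu_adj m len.
set X0 := mkv len x 0; set R0 := mkv len r 0; set Lx := mkv len x (len x).
set A := armv len x (len x).
have Hsym : forall a b, E a b -> E b a by move=> a b; rewrite /E pu_sym.
have HX0 : (tagged X0 : nat) = 0 by rewrite tagged_mkv.
have HR0 : (tagged R0 : nat) = 0 by rewrite tagged_mkv.
have EXR : E X0 R0.
  by rewrite /E /pu_adj /= (negbTE Hxr) HX0 HR0 Hcyc.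
set B := below X0.
have BR0 : ~~ B R0 by rewrite /B /below /= eq_sym (negbTE Hxr).
have NXR : X0 != R0.
  apply/eqP => H; have : tag X0 = tag R0 by rewrite H.
  by move=> /= E1; move: Hxr; rewrite E1 eqxx.
have Hcl : forall z w, B z -> E z w -> B w \/ w = X0 by move=> z w; apply: below_closed.
have HAp : path E Lx A by apply: arm_path.
have HAl : last Lx A = X0 by apply: arm_last.
have HAu : uniq (Lx :: A) by apply: arm_uniq.
have NotArm : forall z, z != X0 -> ~~ B z -> z \notin Lx :: A.
  move=> z Hz HB; apply/negP => Hin.
  case: (arm_mem (leqnn _) Hin) => Ht Hle.
  case: (posnP (tagged z)) => H0.
    by move/eqP: Hz; apply; apply: vert_eq => //; rewrite H0 HX0.
  by move/negP: HB; apply; apply/andP; split; [apply/eqP; rewrite Ht | rewrite HX0].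
have Suff : forall (s p : seq (pu_vertex len)), path E Lx p -> uniq (Lx :: p) ->
    size s <= (size p).+1 -> (size s).+1 <= (tau E Lx).+1.
  move=> s p Hp Hu Hs; rewrite ltnS; exact: leq_trans Hs (tau_ub Hp Hu).
case: (tau_wit E R0) => s [Hp Hu <-].
case: (boolP (X0 \in s)) => HXs; last first.
  apply: (Suff s (A ++ R0 :: s)).
  - by rewrite cat_path HAp HAl /= EXR.
  - rewrite -cat_cons cat_uniq HAu Hu andbT; apply/hasPn => z Hz.
    apply: NotArm.
      by apply: contraNneq HXs => E1; move: Hz; rewrite E1 inE (negbTE NXR).
    move: Hz; rewrite inE => /orP [/eqP -> //|Hz].
    have Hc : X0 \notin R0 :: s by rewrite inE negb_or NXR.
    by rewrite (region_path Hsym Hcl Hp Hc Hz).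
  - by rewrite size_cat /= -addSnnS ar1.
case/splitPr: HXs Hp Hu => s1 s2.
rewrite cat_path => /andP [Hp1 Hp2] Hu.
have Elast : E (last R0 s1) X0 by move: Hp2 => /= /andP [].
have Hs2 : path E X0 s2 by move: Hp2 => /= /andP [].
move: Hu; rewrite -cat_cons cat_uniq => /and3P [UW Dis0 U2].
have XnW : X0 \notin R0 :: s1 by apply: contra Dis0 => H; apply/hasP; exists X0; rewrite ?inE ?eqxx.
have Dis : forall z, z \in R0 :: s1 -> z \notin s2.
  move=> z Hz; apply/negP => Hz2; move/negP: Dis0; apply; apply/hasP; exists z => //.
  by rewrite inE Hz2 orbT.
have Us2 : uniq s2 by move: U2 => /andP [].
have XnS2 : X0 \notin s2 by move: U2 => /andP [].
have NW : forall z, z \in R0 :: s1 -> ~~ B z.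
  move=> z; rewrite inE => /orP [/eqP -> //|Hz].
  by rewrite (region_path Hsym Hcl Hp1 XnW Hz).
have Good : (forall z, z \in s2 -> B z) -> (size (s1 ++ X0 :: s2)).+1 <= (tau E Lx).+1.
  move=> AllB.
  apply: (Suff _ (A ++ rev (R0 :: s1))).
  - rewrite cat_path HAp HAl.
    have := rev_path E R0 (rcons s1 X0); rewrite last_rcons belast_rcons => ->.
    rewrite (@eq_path _ _ E); last by move=> a b /=; rewrite /E pu_sym.
    by rewrite rcons_path Hp1 Elast.
  - rewrite -cat_cons cat_uniq HAu rev_uniq UW andbT; apply/hasPn => z.
    rewrite mem_rev => Hz; apply: NotArm; last by apply: NW.
    by apply: contraNneq XnW => <-.
  - have := count_below Us2 AllB; rewrite HX0 subn0 /=.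
    rewrite !size_cat /= size_rev size_arm /=; exact: ar2.
clear Hp2 Dis0 U2.
move: Hs2 Us2 XnS2 Dis Good; case: s2 => [|y s2'] Hs2 Us2 XnS2 Dis Good.
  by apply: Good.
case: (boolP (B y)) => By.
  apply: Good => z Hz.
  move: Hs2 => /= /andP [Ey Hs2'].
  have Hc : X0 \notin y :: s2' by [].
  move: Hz; rewrite inE => /orP [/eqP -> //|Hz].
  by rewrite (region_path Hsym Hcl Hs2' Hc Hz).
move: Hs2 => /= /andP [Ey Hs2'].
case: (nbr_zero HX0 Ey By) => Hty Hy0 Hcy.
case: s1 Hp1 Elast UW XnW Dis NW Good => [|a s1'] Hp1 Elast UW XnW Dis NW Good.
  apply: (Suff _ (A ++ y :: s2')).
  - by rewrite cat_path HAp HAl /= Ey.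
  - rewrite -cat_cons cat_uniq HAu Us2 andbT; apply/hasPn => z Hz.
    apply: NotArm; first by apply: contraNneq XnS2 => <-.
    move: Hz; rewrite inE => /orP [/eqP -> //|Hz].
    have Hc : X0 \notin y :: s2' by [].
    by rewrite (region_path Hsym Hcl Hs2' Hc Hz).
  - by rewrite size_cat /= ltnS leq_addl.
exfalso.
set z := last a s1'.
have Hz : z \in a :: s1' by apply: mem_last.
have Hz' : z \in R0 :: a :: s1' by rewrite inE Hz orbT.
case: (nbr_zero HX0 (Hsym _ _ Elast) (NW _ Hz')) => Htz Hz0 Hcz.
have Hy : y \in y :: s2' by rewrite inE eqxx.
case: (cyc_three Hcyc Hcz Hcy) => Eq.
- have : R0 = z by apply: vert_eq; rewrite ?Eq ?HR0 ?Hz0.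
  by move=> H; move: UW; rewrite cons_uniq H Hz.
- have : R0 = y by apply: vert_eq; rewrite ?Eq ?HR0 ?Hy0.
  have HR : R0 \in R0 :: a :: s1' by rewrite inE eqxx.
  by move=> H; move: (Dis R0 HR); rewrite H Hy.
- have : z = y by apply: vert_eq; rewrite ?Eq ?Hz0 ?Hy0.
  by move=> H; move: (Dis z Hz'); rewrite H Hy.
Qed.


Lemma ivt_n (f : nat -> nat) (k a n : nat) :
  (forall j, a <= j -> j < a + n -> f j.+1 <= (f j).+1 /\ f j <= (f j.+1).+1) ->
  (f a <= k <= f (a + n)) || (f (a + n) <= k <= f a) ->
  exists2 j, a <= j <= a + n & f j = k.
Proof.
elim: n => [|n IH] Hl Hk.
  exists a; first by rewrite addn0 leqnn.
  by move: Hk; rewrite addn0 orbb => /andP [H1 H2]; apply/eqP; rewrite eqn_leq H1 H2.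
have Hl' : forall j, a <= j -> j < a + n -> f j.+1 <= (f j).+1 /\ f j <= (f j.+1).+1.
  by move=> j H1 H2; apply: Hl => //; rewrite addnS ltnS ltnW.
case: (boolP ((f a <= k <= f (a + n)) || (f (a + n) <= k <= f a))) => Hb.
  case: (IH Hl' Hb) => j /andP [H1 H2] Hj; exists j => //.
  by rewrite H1 addnS (leq_trans H2 (leqnSn _)).
have [H1 H2] : f (a + n).+1 <= (f (a + n)).+1 /\ f (a + n) <= (f (a + n).+1).+1.
  by apply: Hl; [exact: leq_addr | rewrite addnS ltnS].
exists (a + n).+1; first by rewrite addnS leqnn andbT; apply: leqW; apply: leq_addr.
move: Hk Hb H1 H2; rewrite addnS.
move: (f a) (f (a + n)) (f (a + n).+1) => x y z.
clear; lia.
Qed.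

Lemma walk (h : nat -> bool) d : h 0 -> ~~ h d -> exists i, [/\ i < d, h i & ~~ h i.+1].
Proof.
elim: d => [|d IH] H0 Hd; first by rewrite H0 in Hd.
case: (boolP (h d)) => Hd'.
  by exists d; split.
case: (IH H0 Hd') => i [Hi Hhi Hn]; exists i; split => //; exact: ltnW.
Qed.

Lemma mod_step m (x : 'I_m) : 1 < m -> (x : nat) != x.+1 %% m.
Proof.
move=> Hm; have Hx := ltn_ord x.
case: (ltnP x.+1 m) => H.
  by rewrite modn_small // neq_ltn ltnSn.
have E : x.+1 = m by apply/eqP; rewrite eqn_leq Hx H.
rewrite E modnn; apply/eqP => H0; move: E; rewrite H0 => E; by rewrite -E in Hm.
Qed.

Lemma pu_full m (len : 'I_m -> nat) : 1 < m ->
  forall (u w : pu_vertex len) (k : nat),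
  tau (@pu_adj m len) u <= k <= tau (@pu_adj m len) w ->
  exists v, tau (@pu_adj m len) v = k.
Proof.
move=> Hm u w k /andP [Hu Hw].
set E := @pu_adj m len.
case: (boolP [exists v, tau E v == k]) => [/existsP [v /eqP Hv]|Hn]; first by exists v.
exfalso.
have NoK : forall v, tau E v != k by move/existsPn: Hn.
set g := fun i j => tau E (mkv len i j).
have ArmIVT : forall i a b, a <= b -> b <= len i ->
    (g i a <= k <= g i b) || (g i b <= k <= g i a) -> False.
  move=> i a b Hab Hb Hk.
  have Hl : forall j, a <= j -> j < a + (b - a) -> g i j.+1 <= (g i j).+1 /\ g i j <= (g i j.+1).+1.
    move=> j _ Hj; apply: lip_arm; rewrite subnKC // in Hj; exact: leq_trans Hj Hb.
  rewrite -(subnKC Hab) in Hk.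
  case: (ivt_n Hl Hk) => j _ Hj.
  by move/eqP: (NoK (mkv len i j)).
have Hv : forall v : pu_vertex len, v = mkv len (tag v) (tagged v).
  move=> v; apply: vert_eq => //; rewrite tagged_mkv //; rewrite -ltnS; exact: ltn_ord.
have Hle : forall v : pu_vertex len, (tagged v : nat) <= len (tag v).
  by move=> v; rewrite -ltnS; exact: ltn_ord.
set low := fun i => g i (len i) < k.
have Hp : low (tag u).
  have Hu' : g (tag u) (tagged u) < k.
    by rewrite ltn_neqAle /g -Hv NoK.
  rewrite /low ltnNge; apply/negP => Hk.
  apply: (ArmIVT (tag u) (tagged u) (len (tag u))) => //.
  by rewrite (ltnW Hu') Hk.
have Hq : ~~ low (tag w).
  have Hw' : k < g (tag w) (tagged w).
    by rewrite ltn_neqAle /g -Hv eq_sym NoK.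
  apply/negP => Hk; rewrite /low in Hk.
  apply: (ArmIVT (tag w) (tagged w) (len (tag w))) => //.
  by rewrite (ltnW Hk) (ltnW Hw') orbT.
have HighBase : forall i, ~~ low i -> k < g i 0.
  move=> i; rewrite /low -leqNgt => Hi.
  rewrite ltn_neqAle eq_sym NoK /=; rewrite leqNgt; apply/negP => H0.
  apply: (ArmIVT i 0 (len i)) => //.
  by rewrite (ltnW H0) Hi.
have Hm0 : 0 < m by apply: ltnW.
set o := fun n => Ordinal (ltn_pmod n Hm0).
have Ho0 : o (tag u : nat) = tag u by apply: val_inj; rewrite /= modn_small.
have Hod : o (tag u + (tag w + m - tag u)) = tag w.
  apply: val_inj; rewrite /= subnKC; last by rewrite (leq_trans (ltnW (ltn_ord _))) // leq_addl.
  by rewrite modnDr modn_small.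
case: (walk (h := fun i => low (o (tag u + i))) (d := tag w + m - tag u)).
- by rewrite /= addn0 Ho0.
- by rewrite /= Hod.
move=> i [_ Hx Hr].
set x := o (tag u + i); set r := o (tag u + i.+1).
have Hcyc : cyc_adj x r.
  rewrite /cyc_adj; apply/orP; left; apply/eqP.
  by rewrite /= -[in RHS]addn1 modnDml addn1 addnS.
have Hxr : x != r.
  apply/negP => /eqP Exr; move: Hcyc; rewrite /cyc_adj -Exr.
  by rewrite (negbTE (mod_step x Hm)).
have := key_adj len Hxr Hcyc.
have := HighBase r Hr.
move: Hx; rewrite /low /g.
move: (tau E (mkv len x (len x))) (tau E (mkv len r 0)) => a b.
clear; lia.
Qed.


Theorem theorem1p20 (T : finType) (e : rel T) :
  path_unicyclic e -> detour_full e.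
Proof.
move=> [m [len [f [Hm _ Hf He]]]] u w k Hk.
have Htr := tau_iso Hf He.
rewrite !Htr in Hk.
have Hm1 : 1 < m by apply: leq_trans Hm.
case: (pu_full Hm1 Hk) => z Hz.
case: Hf => g fg gf.
by exists (g z); rewrite Htr gf.
Qed.
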